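(* Fix a directed edge set $\mathcal{E}\subseteq\{(k,i)\in[n]^2: k\neq i\}$ and a randomized design (a probability distribution for ${\bf z}\in\{0,1\}^n$) with $0<\mathbb{E}[z_i]<1$ for all $i\in[n]$. Suppose the individually weighted linear estimator $\hat{\mathrm{est}}({\bf w},{\bf v})=\sum_{i\in[n]}\big(w_iz_i+v_i(1-z_i)\big)Y_i({\bf z})$ is unbiased for $\mathrm{TTE}$ under the heterogeneous additive network effects model with edge set $\mathcal{E}$, i.e. $\mathbb{E}[\hat{\mathrm{est}}({\bf w},{\bf v})]=\mathrm{TTE}$ for every choice of real parameters $\{\alpha_i\}_{i\in[n]}$, $\{\beta_i\}_{i\in[n]}$, $\{\gamma_{ki}\}_{(k,i)\in\mathcal{E}}$. Then necessarily $w_i=\frac{1}{n\mathbb{E}[z_i]}$ and $v_i=-\frac{1}{n\mathbb{E}[1-z_i]}$ for all $i$, i.e. \[\hat{\mathrm{est}}({\bf w},{\bf v})=\frac1n\sum_{i\in[n]}\Big(\frac{z_i}{\mathbb{E}[z_i]}-\frac{1-z_i}{\mathbb{E}[1-z_i]}\Big)Y_i({\bf z}),\] and the design must satisfy $\mathbb{P}(z_k=z_i)=1$ for all $(k,i)\in\mathcal{E}$.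
   Context: Population $[n]=\{1,\dots,n\}$; treatment vector ${\bf z}=(z_1,\dots,z_n)\in\{0,1\}^n$ is random, drawn from a distribution called the randomized design. Heterogeneous additive network effects model: for real parameters $\alpha_i$ (baseline), $\beta_i$ (direct effect) and $\gamma_{ki}$ (effect of $k$'s treatment on $i$), the potential outcomes are $Y_i({\bf z})=\alpha_i+\beta_iz_i+\sum_{k\in[n]}\gamma_{ki}z_k$, where $\gamma_{ki}=0$ unless $(k,i)\in\mathcal{E}$, and $\mathcal{E}$ is a set of ordered pairs $(k,i)$ with $k\neq i$ (the network). The parameters are deterministic; all expectations are over ${\bf z}$. Total treatment effect: $\mathrm{TTE}=\frac1n\sum_{i}(Y_i({\bf 1})-Y_i({\bf 0}))=\frac1n\big(\sum_i\beta_i+\sum_{(k,i)\in\mathcal{E}}\gamma_{ki}\big)$. An individually weighted linear estimator is $\hat{\mathrm{est}}({\bf w},{\bf v})=\sum_{i}(w_iz_i+v_i(1-z_i))Y_i({\bf z})$ with deterministic real weights ${\bf w},{\bf v}$ not depending on ${\bf z}$. *)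

(* Defs.v *)
From mathcomp Require Import all_boot all_order all_algebra.
Set Implicit Arguments. Unset Strict Implicit. Unset Printing Implicit Defensive.
Import Order.TTheory GRing.Theory Num.Theory.
Local Open Scope ring_scope.

Section Defs.
Variables (R : realFieldType) (n : nat).

Definition assignment := {ffun 'I_n -> bool}.

Definition is_design (P : {ffun assignment -> R}) : Prop :=
  (forall z, 0 <= P z) /\ \sum_z P z = 1.

Definition Ex (P : {ffun assignment -> R}) (f : assignment -> R) : R :=
  \sum_z P z * f z.

Definition Pr (P : {ffun assignment -> R}) (A : pred assignment) : R :=
  \sum_(z | A z) P z.

Definition Yout (alpha beta : 'I_n -> R) (gamma : 'I_n -> 'I_n -> R)
  (z : assignment) (i : 'I_n) : R :=
  alpha i + beta i * (z i)%:R + \sum_k gamma k i * (z k)%:R.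

Definition TTE (E : {set 'I_n * 'I_n}) (beta : 'I_n -> R)
  (gamma : 'I_n -> 'I_n -> R) : R :=
  (\sum_i beta i + \sum_(p in E) gamma p.1 p.2) / n%:R.

Definition est (w v : 'I_n -> R) (alpha beta : 'I_n -> R)
  (gamma : 'I_n -> 'I_n -> R) (z : assignment) : R :=
  \sum_i (w i * (z i)%:R + v i * (1 - (z i)%:R)) * Yout alpha beta gamma z i.

End Defs.

(* Main.v *)
Require Import Defs.
From mathcomp Require Import all_boot all_order all_algebra.
From mathcomp Require Import ring lra.
Import Order.TTheory GRing.Theory Num.Theory.
Local Open Scope ring_scope.

Section H.
Variables (R : realFieldType) (n : nat) (P : {ffun assignment n -> R}).

Lemma Ex_ext f g : (forall z, f z = g z) -> Ex P f = Ex P g.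
Proof. by move=> H; apply: eq_bigr => z _; rewrite H. Qed.

Lemma ExD f g : Ex P (fun z => f z + g z) = Ex P f + Ex P g.
Proof. by rewrite /Ex -big_split; apply: eq_bigr => z _; rewrite mulrDr. Qed.

Lemma ExZ a f : Ex P (fun z => a * f z) = a * Ex P f.
Proof. by rewrite /Ex mulr_sumr; apply: eq_bigr => z _; rewrite mulrCA. Qed.

Lemma Ex1 : Ex P (fun _ => 1) = \sum_z P z.
Proof. by apply: eq_bigr => z _; rewrite mulr1. Qed.

Lemma Ex_ge0 f : (forall z, 0 <= P z) -> (forall z, 0 <= f z) -> 0 <= Ex P f.
Proof. by move=> H1 H2; apply: sumr_ge0 => z _; apply: mulr_ge0. Qed.

Lemma PrE (A : pred (assignment n)) : Pr P A = Ex P (fun z => (A z)%:R).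
Proof.
rewrite /Pr /Ex big_mkcond; apply: eq_bigr => z _.
by case: (A z); rewrite ?mulr1 ?mulr0.
Qed.

Lemma est_single (w v alpha beta : 'I_n -> R) gamma i g :
  (forall z j, Yout alpha beta gamma z j = (j == i)%:R * g z) ->
  forall z, est w v alpha beta gamma z
    = (w i * (z i)%:R + v i * (1 - (z i)%:R)) * g z.
Proof.
move=> H z; rewrite /est (bigD1 i) //= big1 ?addr0 => [|j ji].
  by rewrite H eqxx mul1r.
by rewrite H (negbTE ji) mul0r mulr0.
Qed.

End H.
Arguments est_single {R n} w v alpha beta gamma i g.
Arguments Ex_ext {R n P} f g.

Theorem theorem1 (R : realFieldType) (n : nat) (E : {set 'I_n * 'I_n})
  (P : {ffun assignment n -> R}) (w v : 'I_n -> R) :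
  (forall p, p \in E -> p.1 != p.2) ->
  is_design P ->
  (forall i : 'I_n, 0 < Ex P (fun z => (z i)%:R) < 1) ->
  (forall (alpha beta : 'I_n -> R) (gamma : 'I_n -> 'I_n -> R),
      (forall k i, (k, i) \notin E -> gamma k i = 0) ->
      Ex P (est w v alpha beta gamma) = TTE E beta gamma) ->
  (forall i : 'I_n,
      w i = 1 / (n%:R * Ex P (fun z => (z i)%:R)) /\
      v i = - (1 / (n%:R * Ex P (fun z => 1 - (z i)%:R)))) /\
  (forall k i : 'I_n, (k, i) \in E -> Pr P (fun z => z k == z i) = 1).
Proof.
move=> HE [P0 P1] Hp Hunb.
have Ex1' : Ex P (fun _ => 1) = 1 by rewrite Ex1.
have Ex1m : forall f, Ex P (fun z => 1 - f z) = 1 - Ex P f.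
  move=> f; rewrite /Ex -[in RHS]P1 -sumrB; apply: eq_bigr => z _; by rewrite mulrBr mulr1.
have nz : forall i : 'I_n, n%:R != 0 :> R.
  by move=> i; rewrite pnatr_eq0 -lt0n (leq_ltn_trans _ (ltn_ord i)).
have Hw : forall i : 'I_n, w i * Ex P (fun z => (z i)%:R) = 1 / n%:R.
  move=> i.
  have := Hunb (fun _ => 0) (fun j => (j == i)%:R) (fun _ _ => 0) (fun _ _ _ => erefl).
  rewrite (Ex_ext _ _ (est_single w v _ _ _ i (fun z => (z i)%:R) _)); last first.
    move=> z j; rewrite /Yout big1 ?addr0 ?add0r => [|k _]; last by rewrite mul0r.
    by case: eqP => [->|]; rewrite ?mul0r.
  rewrite /TTE big1_eq addr0 (bigD1 i) //= eqxx big1 ?addr0 => [|j ji]; last by rewrite (negbTE ji).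
  move=> <-; rewrite -ExZ; apply: Ex_ext => z.
  by case: (z i) => /=; ring.
have Hwv : forall i : 'I_n, w i * Ex P (fun z => (z i)%:R)
          + v i * (1 - Ex P (fun z => (z i)%:R)) = 0.
  move=> i.
  have := Hunb (fun j => (j == i)%:R) (fun _ => 0) (fun _ _ => 0) (fun _ _ _ => erefl).
  rewrite (Ex_ext _ _ (est_single w v _ _ _ i (fun z => 1) _)); last first.
    move=> z j; rewrite /Yout big1 ?addr0 => [|k _]; last by rewrite mul0r.
    by rewrite mul0r addr0 mulr1.
  rewrite /TTE !big1 ?addr0 ?mul0r //.
  move=> <-; rewrite -Ex1m -!ExZ -ExD; apply: Ex_ext => z; ring.
have Hgam : forall k i : 'I_n, (k, i) \in E ->
    w i * Ex P (fun z => (z i)%:R * (z k)%:R)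
    + v i * Ex P (fun z => (1 - (z i)%:R) * (z k)%:R) = 1 / n%:R.
  move=> k i Hki.
  have := Hunb (fun _ => 0) (fun _ => 0)
     (fun k' j => ((k' == k) && (j == i))%:R).
  rewrite (Ex_ext _ _ (est_single w v _ _ _ i (fun z => (z k)%:R) _)); last first.
    move=> z j; rewrite /Yout mul0r !add0r.
    case: (j == i).
      rewrite (bigD1 k) //= !eqxx mul1r big1 ?addr0 // => k' /negbTE ->.
      by rewrite mul0r.
    rewrite mul0r big1 // => k' _; by rewrite andbF mul0r.
  rewrite /TTE big1_eq add0r (bigD1 (k, i)) //= !eqxx /= big1 ?addr0; last first.
    by case=> a b /andP[_ pki]; rewrite -xpair_eqE (negbTE pki).
  move=> H; rewrite -H; last first.
    move=> a b; case: andP => [[/eqP -> /eqP ->]|] //; by rewrite Hki.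
  rewrite -!ExZ -ExD; apply: Ex_ext => z; ring.
have Hwi : forall i : 'I_n, w i = 1 / (n%:R * Ex P (fun z => (z i)%:R)).
  move=> i; have /andP[p0 p1] := Hp i.
  have pne : Ex P (fun z => (z i)%:R) != 0 by rewrite gt_eqF.
  apply/(mulIf pne); rewrite Hw; field; by rewrite pne (nz i).
have Hvi : forall i : 'I_n, v i = - (1 / (n%:R * (1 - Ex P (fun z => (z i)%:R)))).
  move=> i; have /andP[p0 p1] := Hp i.
  have qne : 1 - Ex P (fun z => (z i)%:R) != 0 by rewrite subr_eq0 eq_sym lt_eqF.
  have Hv : v i * (1 - Ex P (fun z => (z i)%:R)) = - (1 / n%:R).
    rewrite -(Hw i); apply/eqP; rewrite -addr_eq0 addrC; apply/eqP; exact: Hwv.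
  apply/(mulIf qne); rewrite Hv; field; by rewrite qne (nz i).
split.
  by move=> i; rewrite Ex1m; split; [apply: Hwi | apply: Hvi].
move=> k i Hki.
have /andP[p0 p1] := Hp i.
set p := Ex P (fun z => (z i)%:R) in p0 p1 Hwi Hvi Hgam *.
have pne : p != 0 by rewrite gt_eqF.
have qne : 1 - p != 0 by rewrite subr_eq0 eq_sym lt_eqF.
have q0 : 0 < 1 - p by rewrite subr_gt0.
set X := Ex P (fun z => (z i)%:R * (1 - (z k)%:R)).
set b := Ex P (fun z => (1 - (z i)%:R) * (z k)%:R).
have Ha : Ex P (fun z => (z i)%:R * (z k)%:R) = p - X.
  apply/eqP; rewrite eq_sym subr_eq -ExD; apply/eqP; rewrite /p; apply: Ex_ext => z; ring.
have H := Hgam k i Hki; rewrite Ha (Hwi i) (Hvi i) -/b in H.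
have key : X * (1 - p) + b * p = 0.
  have -> : X * (1 - p) + b * p = (p * (1 - p) * n%:R) *
      (1 / n%:R - (1 / (n%:R * p) * (p - X) + - (1 / (n%:R * (1 - p))) * b)).
    by field; rewrite pne qne (nz i).
  by rewrite H subrr mulr0.
have X0 : 0 <= X by apply: Ex_ge0 => // z; case: (z i); case: (z k) => /=; rewrite ?mulr1n ?mulr0n ?subrr ?subr0 ?mulr0 ?mul0r ?mulr1 ?ler01 ?lexx.
have b0 : 0 <= b by apply: Ex_ge0 => // z; case: (z i); case: (z k) => /=; rewrite ?mulr1n ?mulr0n ?subrr ?subr0 ?mulr0 ?mul0r ?mulr1 ?ler01 ?lexx.
move/eqP: key; rewrite paddr_eq0 ?mulr_ge0 ?(ltW q0) ?(ltW p0) //.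
rewrite !mulf_eq0 (negbTE pne) (negbTE qne) !orbF => /andP[/eqP XE /eqP bE].
rewrite PrE; transitivity (1 - (X + b)); last by rewrite XE bE addr0 subr0.
rewrite /X /b -ExD -Ex1m; apply: Ex_ext => z.
case: (z i); case: (z k) => /=; rewrite ?mulr1n ?mulr0n ?subrr ?subr0 ?mulr0 ?mul0r ?mulr1 ?addr0 ?add0r ?subr0 ?subrr //.
Qed.
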